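(* Let $R$ be a finite transitive permutation group of degree $n$. Then $R$ has at most \[ 7.3722 \cdot n^{\frac{\log_2 n}{4} + 1.8919} \] systems of imprimitivity. *)

(* Defs.v *)
From mathcomp Require Import all_boot all_fingroup.
From Stdlib Require Import Reals.

Set Implicit Arguments.
Unset Strict Implicit.
Unset Printing Implicit Defensive.

(* Trivial systems (singletons, whole set) are included. *)
Definition block_system (T : finType) (G : {group {perm T}}) (P : {set {set T}}) : bool :=
  partition P [set: T] &&
  [forall g in G, forall B in P, [set g x | x in B] \in P].

Definition num_block_systems (T : finType) (G : {group {perm T}}) : nat :=
  #|[set P : {set {set T}} | block_system G P]|.

Definition log2R (x : R) : R := (ln x / ln 2)%R.

(* Main.v *)
Require Import Defs.
From mathcomp Require Import all_boot all_fingroup.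
From Stdlib Require Import Reals.
From mathcomp Require Import zify.
From Stdlib Require Import Lra.
Set Implicit Arguments. Unset Strict Implicit. Unset Printing Implicit Defensive.
Local Notation "m ^ n" := (expn m n) : nat_scope.
Lemma sum_pred_card (I : finType) (X : {set I}) (p : pred I) :
  \sum_(x in X) (p x : nat) = #|[set x in X | p x]|.
Proof.
rewrite -sum1_card (big_mkcond (fun x => x \in [set x in X | p x])) /=.
rewrite [RHS](big_mkcond) /= [LHS]big_mkcond /=.
apply: eq_bigr => x _; rewrite inE; by case: (x \in X); case: (p x).
Qed.

Definition Aset (gT : finGroupType) (G S : {group gT}) (M : nat) : {set {group gT}} :=
  [set H : {group gT} | (S \subset H) && (H \subset G) && (#|H| == M)].

Lemma claim (gT : finGroupType) (G : {group gT}) (j : nat) :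
  forall (S : {group gT}) M, S \subset G -> M < 2 ^ j.+1 * #|S| ->
  #|Aset G S M| * M ^ j <= (2 * #|G|) ^ j.
Proof.
elim: j => [|j IH] S M sSG hM.
  rewrite !expn0 !muln1.
  apply: (@leq_trans #|[set S]|); last by rewrite cards1.
  apply: subset_leq_card; apply/subsetP => H; rewrite !inE => /andP[/andP[sSH _] /eqP cH].
  have dv := cardSg sSH. rewrite cH in dv.
  have Mpos : 0 < M by rewrite -cH cardG_gt0.
  have eM : M = #|S|.
    case/dvdnP: dv => q hq. move: hM; rewrite hq expn1.
    case: q hq => [|[|q]] hq; first by rewrite hq in Mpos.
      by rewrite mul1n.
    rewrite ltn_pmul2r ?cardG_gt0 //.
  apply/eqP; apply: val_inj => /=. by apply/eqP; rewrite eq_sym eqEcard sSH cH eM leqnn.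
have [A0|An0] := posnP #|Aset G S M|; first by rewrite ?A0 ?mul0n.
case/card_gt0P: An0 => H0; rewrite inE => /andP[/andP[sSH0 sH0G] /eqP cH0].
have dv := cardSg sSH0; rewrite cH0 in dv.
have Mpos : 0 < M by rewrite -cH0 cardG_gt0.
have [eM|neM] := eqVneq M #|S|.
  apply: (@leq_trans (1 * M ^ j.+1)).
    rewrite leq_mul2r; apply/orP; right.
    apply: (@leq_trans #|[set S]|); last by rewrite cards1.
    apply: subset_leq_card; apply/subsetP => H; rewrite !inE => /andP[/andP[sSH _] /eqP cH].
    apply/eqP; apply: val_inj => /=. by apply/eqP; rewrite eq_sym eqEcard sSH cH eM leqnn.
  rewrite mul1n leq_exp2r // eM.
  apply: (leq_trans (subset_leq_card sSG)); rewrite leq_pmull //.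
have M2 : 2 * #|S| <= M.
  case/dvdnP: dv => q hq. rewrite hq leq_mul2r; apply/orP; right.
  case: q hq => [|[|q]] hq //; first by rewrite hq in Mpos.
  by rewrite hq mul1n eqxx in neM.
have key : \sum_(H in Aset G S M) #|H :\: S| = \sum_(g in G :\: S) #|[set H in Aset G S M | g \in H]|.
  rewrite (eq_bigr (fun H : {group gT} => \sum_(g in G :\: S) (g \in H : nat))).
    rewrite exchange_big /=. apply: eq_bigr => g _. by rewrite sum_pred_card.
  move=> H; rewrite inE => /andP[/andP[_ sHG] _].
  rewrite sum_pred_card; apply: eq_card => x; rewrite !inE.
  case xH: (x \in H); rewrite ?andbF ?andbT //=.
  by rewrite (subsetP sHG x xH) andbT.
have lhs : #|Aset G S M| * (M - #|S|) <= \sum_(H in Aset G S M) #|H :\: S|.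
  rewrite -sum1_card big_distrl /=. apply: leq_sum => H; rewrite inE => /andP[/andP[sSH _] /eqP cH].
  by rewrite mul1n cardsDS // cH.
have rhs : (\sum_(g in G :\: S) #|[set H in Aset G S M | g \in H]|) * M ^ j
            <= #|G| * (2 * #|G|) ^ j.
  rewrite big_distrl /=.
  apply: (@leq_trans (\sum_(g in G :\: S) (2 * #|G|) ^ j)).
    apply: leq_sum => g; rewrite inE => /andP[gS gG].
    pose S' := <<(S :|: [set g])>>%G.
    have sS'G : S' \subset G by rewrite gen_subG subUset sSG sub1set gG.
    have sSS' : S \subset S' by apply: (subset_trans _ (subset_gen _)); apply: subsetUl.
    have gS' : g \in S' by apply: (subsetP (subset_gen _)); rewrite !inE eqxx orbT.
    have cS' : 2 * #|S| <= #|S'|.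
      case/dvdnP: (cardSg sSS') => q hq. rewrite hq leq_mul2r; apply/orP; right.
      case: q hq => [|[|q]] hq.
        by have := cardG_gt0 S'; rewrite hq.
      have: S \subset S' by [].
      rewrite mul1n in hq. move=> _.
      have eqS : (S : {set gT}) = S'.
        apply/eqP; rewrite eqEcard sSS' hq leqnn. by [].
      by move: gS'; rewrite -eqS (negbTE gS).
      by [].
    apply: (leq_trans _ (IH S' M sS'G _)).
      rewrite leq_mul2r; apply/orP; right.
      apply: subset_leq_card; apply/subsetP => H; rewrite !inE.
      case/andP => /andP[/andP[sSH sHG] cH] gH.
      by rewrite sHG cH andbT gen_subG subUset sSH sub1set gH.
    apply: (leq_trans hM). by rewrite [2 ^ j.+2]expnS -mulnA mulnCA leq_mul2l cS' orbT.
  rewrite sum_nat_const. rewrite leq_mul2r; apply/orP; right.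
  apply: subset_leq_card; apply/subsetP => x; rewrite inE; by case/andP.
rewrite expnS mulnA.
apply: (@leq_trans ((2 * (#|Aset G S M| * (M - #|S|))) * M ^ j)).
  rewrite leq_mul2r; apply/orP; right.
  rewrite mulnCA leq_mul2l; apply/orP; right.
  lia.
rewrite [(2 * #|G|) ^ j.+1]expnS -!mulnA leq_mul2l; apply/orP; right.
apply: leq_trans rhs. rewrite mulnA leq_mul2r; apply/orP; right. rewrite -key. exact: lhs.
Qed.

Lemma exp_mono (x y : R) : (x <= y)%R -> (exp x <= exp y)%R.
Proof. move=> h; case: (Rle_lt_or_eq_dec _ _ h) => h'.
  by apply: Rlt_le; apply: exp_increasing. by rewrite h'; apply: Rle_refl. Qed.
Arguments exp_mono : clear implicits.

Lemma ln2pos : (0 < ln 2)%R.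
Proof. have := ln_lt_2; lra. Qed.

Lemma INR_muln m n : INR (m * n)%N = (INR m * INR n)%R.
Proof. by rewrite -multE mult_INR. Qed.
Arguments INR_muln : clear implicits.

Lemma INR_addn m n : INR (m + n)%N = (INR m + INR n)%R.
Proof. exact: plus_INR. Qed.
Arguments INR_addn : clear implicits.

Lemma INR_expn m n : INR (m ^ n)%N = (INR m ^ n)%R.
Proof. elim: n => [|n IH]; first by rewrite expn0 /=. by rewrite expnS INR_muln IH /=. Qed.
Arguments INR_expn : clear implicits.

Lemma pow_exp (x : R) (j : nat) : (0 < x)%R -> (x ^ j = exp (INR j * ln x))%R.
Proof. move=> hx; by rewrite -Rpower_pow. Qed.
Arguments pow_exp : clear implicits.

Lemma real_bound (a n j : nat) : (0 < n)%N -> (a * (2^j)^j <= (2*n)^j)%N ->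
  (INR a <= exp ((ln (2 * INR n))^2 / (4 * ln 2)))%R.
Proof.
move=> n0 /leP /le_INR; rewrite INR_muln !INR_expn INR_muln.
have n0' : (0 < INR n)%R by apply: lt_0_INR; apply/ltP.
have L := ln2pos.
have e2 : INR 2 = 2%R by simpl; ring.
rewrite e2 (pow_exp (2 * INR n) j); last by lra.
rewrite (pow_exp (2 ^ j) j); last by apply: pow_lt; lra.
rewrite ln_pow; last lra.
set u := ln (2 * INR n). set l := ln 2. set y := INR j.
have Ll : (0 < l)%R by exact: L. clearbody u l y.
move=> h.
have h2 : (INR a <= exp (y * u - y * (y * l)))%R.
  rewrite /Rminus exp_plus exp_Ropp.
  apply: (Rmult_le_reg_r (exp (y * (y * l)))); first by apply: exp_pos.
  rewrite Rmult_assoc Rinv_l; last by apply: Rgt_not_eq; apply: exp_pos.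
  by rewrite Rmult_1_r.
apply: (Rle_trans _ _ _ h2); apply: exp_mono.
have : (0 <= (u - 2 * y * l) ^ 2 / (4 * l))%R.
  apply: Rmult_le_pos; first by apply: pow2_ge_0.
  apply: Rlt_le; apply: Rinv_0_lt_compat; lra.
have -> : ((u - 2 * y * l) ^ 2 / (4 * l) = u ^ 2 / (4 * l) - (y * u - y * (y * l)))%R.
  field; lra.
lra.
Qed.
Arguments real_bound : clear implicits.

Lemma sum_bound (N : nat) (f : nat -> nat) (E : R) :
  (forall i, INR (f i) <= E)%R -> (INR (\sum_(i < N) f i) <= INR N * E)%R.
Proof.
move=> hf; elim: N => [|N IH]; first by rewrite big_ord0 /=; lra.
rewrite big_ord_recr INR_addn S_INR Rmult_plus_distr_r Rmult_1_l. have hN := hf N. change (INR (\sum_(i < N) f i) + INR (f N) <= INR N * E + E)%R. lra.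
Qed.
Arguments sum_bound : clear implicits.

Lemma final_real (n : nat) : (0 < n)%N ->
  (INR n.+1 * exp ((ln (2 * INR n))^2 / (4 * ln 2)) <=
   (73722 / 10000) * Rpower (INR n) (log2R (INR n) / 4 + 18919 / 10000))%R.
Proof.
move=> n0.
have n1 : (1 <= INR n)%R by apply: (le_INR 1); apply/leP.
have L := ln2pos.
have t0 : (0 <= ln (INR n))%R.
  case: (Rle_lt_or_eq_dec _ _ n1) => h; last by rewrite -h ln_1; lra.
  rewrite -ln_1; apply: Rlt_le; apply: ln_increasing; lra.
rewrite /Rpower /log2R ln_mult; try lra.
set t := ln (INR n). set l := ln 2.
have Ll : (0 < l)%R by exact: L.
have tt0 : (0 <= t)%R by exact: t0.
have hn : (INR n.+1 <= exp (l + t))%R.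
  rewrite exp_plus /l /t !exp_ln; try lra. rewrite S_INR; lra.
have e4 : (exp (5/4 * l) <= 4)%R.
  apply: (Rle_trans _ (exp (2 * l))).
    apply: exp_mono; lra.
  have -> : (2 * l = l + l)%R by ring.
  rewrite exp_plus /l exp_ln; lra.
have ep : forall x, (0 < exp x)%R by exact: exp_pos.
apply: (Rle_trans _ (exp (l + t) * exp ((l + t) ^ 2 / (4 * l)))).
  apply: Rmult_le_compat_r; [apply: Rlt_le; apply: ep | exact: hn].
rewrite -exp_plus.
have -> : (l + t + (l + t) ^ 2 / (4 * l) = 5/4 * l + (t / l / 4 * t + 3/2 * t))%R.
  field; lra.
rewrite exp_plus.
have h3 : (exp (t / l / 4 * t + 3 / 2 * t) <= exp ((t / l / 4 + 18919 / 10000) * t))%R.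
  apply: exp_mono; nra.
have := ep (t / l / 4 * t + 3 / 2 * t)%R.
have := ep (5/4 * l)%R.
nra.
Qed.
Arguments final_real : clear implicits.

Section Blocks.
Variables (T : finType) (G : {group {perm T}}) (a : T).
Hypothesis htr : [transitive G, on [set: T] | 'P].

Lemma trans_ex x : exists2 g, g \in G & g a = x.
Proof.
have ho := atransP htr a (in_setT a).
have : x \in orbit 'P G a by rewrite ho in_setT.
by case/orbitP => g gG <-; exists g.
Qed.

Lemma bs_facts P : block_system G P ->
  [/\ trivIset P, set0 \notin P, forall x, pblock P x \in P, forall x, x \in pblock P x &
   forall g, g \in G -> forall B, B \in P -> [set g x | x in B] \in P].
Proof.
case/andP => /and3P [/eqP cov triv nz] /forall_inP hc; split => //.
- by move=> x; apply: pblock_mem; rewrite cov in_setT.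
- by move=> x; rewrite mem_pblock cov in_setT.
- by move=> g gG B BP; move/forall_inP: (hc g gG) => h; exact: h.
Qed.

Lemma img_eq P g x B : block_system G P -> g \in G -> B \in P -> x \in B -> g x \in B ->
  [set g y | y in B] = B.
Proof.
case/bs_facts => triv _ _ _ hc gG BP xB gxB.
have iP := hc g gG B BP.
have gx : g x \in [set g y | y in B] by apply: imset_f.
by rewrite -(def_pblock triv iP gx) (def_pblock triv BP gxB).
Qed.

Lemma actPE x (g : {perm T}) : 'P%act x g = g x.
Proof. by []. Qed.

Definition Hof (P : {set {set T}}) : {group {perm T}} := 'N_G(pblock P a | 'P)%G.

Lemma Hof_mem P g : block_system G P ->
  (g \in Hof P) = (g \in G) && (g a \in pblock P a).
Proof.
move=> bs; have [triv _ pm mp hc] := bs_facts bs.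
rewrite /Hof /= inE.
case gG: (g \in G) => //=.
apply/idP/idP.
  by move/astabsP => h; have := h a; rewrite actPE => ->; apply: mp.
move=> gaB; apply/astabsP => x; rewrite actPE.
have e := img_eq bs gG (pm a) (mp a) gaB.
by rewrite -{1}e mem_imset //; apply: perm_inj.
Qed.

Lemma bs_sub P Q : block_system G P -> block_system G Q -> pblock P a = pblock Q a ->
  P \subset Q.
Proof.
move=> bP bQ e; have [trivP nzP pmP mpP hcP] := bs_facts bP.
have [trivQ nzQ pmQ mpQ hcQ] := bs_facts bQ.
apply/subsetP => C CP.
have : C != set0 by apply: contraNneq nzP => <-.
case/set0Pn => x xC.
have [g gG gax] := trans_ex x.
have iP := hcP g gG _ (pmP a).
have iQ : [set g y | y in pblock P a] \in Q by rewrite e; apply: hcQ => //.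
have xi : x \in [set g y | y in pblock P a] by rewrite -gax; apply: imset_f.
by rewrite -(def_pblock trivP CP xC) (def_pblock trivP iP xi).
Qed.

Lemma Hof_inj P Q : block_system G P -> block_system G Q -> Hof P = Hof Q -> P = Q.
Proof.
move=> bP bQ eH.
have eB : pblock P a = pblock Q a.
  apply/setP => x; have [g gG <-] := trans_ex x.
  have := Hof_mem g bP; have := Hof_mem g bQ; rewrite eH gG /= => -> ->. by [].
by apply/eqP; rewrite eqEsubset (bs_sub bP bQ eB) (bs_sub bQ bP (esym eB)).
Qed.

Lemma K_sub_Hof P : block_system G P -> ('C_G[a | 'P] \subset Hof P)%g.
Proof.
move=> bP; have [_ _ _ mp _] := bs_facts bP.
apply/subsetP => g; rewrite inE => /andP[gG /astab1P]; rewrite actPE => ga.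
by rewrite Hof_mem // gG ga mp.
Qed.

End Blocks.

Theorem corollary1p2 (T : finType) (G : {group {perm T}}) :
  (0 < #|T|)%N ->
  [transitive G, on [set: T] | 'P] ->
  (INR (num_block_systems G) <=
     (73722 / 10000) *
     Rpower (INR #|T|) (log2R (INR #|T|) / 4 + 18919 / 10000))%R.
Proof.
move=> Tpos htr.
case/card_gt0P: (Tpos) => a _.
set K := 'C_G[a | 'P]%G.
set n := #|T|.
have sKG : K \subset G by apply: subsetIl.
have nE : n = #|G : K|%g.
  by rewrite /n -cardsT -(atransP htr a (in_setT a)) card_orbit.
have cG : #|G| = (#|K| * n)%N by rewrite nE Lagrange.
set X := [set H : {group {perm T}} | (K \subset H) && (H \subset G)].
have step1 : (num_block_systems G <= #|X|)%N.
  rewrite /num_block_systems.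
  rewrite -(@card_in_imset _ _ (Hof G a)).
    apply: subset_leq_card; apply/subsetP => H /imsetP [P]; rewrite inE => bP ->.
    by rewrite inE K_sub_Hof // subsetIl.
  move=> P Q; rewrite !inE => bP bQ; exact: Hof_inj.
have step2 : (#|X| <= \sum_(i < n.+1) #|Aset G K (i * #|K|)|)%N.
  rewrite -sum1_card (partition_big (fun H : {group {perm T}} => (inord #|H : K|%g : 'I_n.+1)) xpredT) //=.
  apply: leq_sum => i _.
  rewrite sum1_card; apply: subset_leq_card; apply/subsetP => H; rewrite !inE.
  rewrite unfold_in inE => /andP[/andP[sKH sHG] /eqP ei].
  rewrite sKH sHG /=.
  have hle : (#|H : K|%g < n.+1)%N.
    rewrite ltnS nE; apply: dvdn_leq; first by rewrite indexg_gt0.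
    exact: indexSg.
  by rewrite -ei inordK // mulnC Lagrange.
set E := exp ((ln (2 * INR n))^2 / (4 * ln 2)).
have step3 : forall i, (INR #|Aset G K (i * #|K|)| <= E)%R.
  move=> i; apply: (real_bound #|Aset G K (i * #|K|)| n (trunc_log 2 i)) => //.
  set j := trunc_log 2 i.
  have hc := claim (j := j) sKG (M := i * #|K|).
  have hi : (i < 2 ^ j.+1)%N by apply: trunc_log_ltn.
  have := hc (_ : (i * #|K| < 2 ^ j.+1 * #|K|)%N); rewrite ltn_pmul2r ?cardG_gt0 // => /(_ hi).
  have e1 : ((i * #|K|) ^ j = i ^ j * #|K| ^ j)%N by rewrite expnMn.
  have e2 : ((2 * #|G|) ^ j = (2 * n) ^ j * #|K| ^ j)%N by rewrite cG mulnCA expnMn mulnC.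
  rewrite e1 e2 mulnA leq_pmul2r ?expn_gt0 ?cardG_gt0 // => h.
  case: (posnP i) => [i0|ipos].
    have -> : #|Aset G K (i * #|K|)| = 0%N.
      apply/eqP; rewrite cards_eq0; apply/eqP/setP => H; rewrite !inE i0 mul0n.
      by rewrite eqn0Ngt cardG_gt0 !andbF.
    by rewrite mul0n.
  apply: leq_trans h; rewrite leq_mul2l; apply/orP; right.
  case: (posnP j) => [-> //|jpos].
  by rewrite leq_exp2r //; apply: trunc_logP.
apply: (Rle_trans _ (INR #|X|)); first by apply: le_INR; apply/leP.
apply: (Rle_trans _ (INR (\sum_(i < n.+1) #|Aset G K (i * #|K|)|))); first by apply: le_INR; apply/leP.
apply: (Rle_trans _ (INR n.+1 * E)).
  exact: (sum_bound n.+1 (fun i => #|Aset G K (i * #|K|)|) E step3).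
exact: final_real.
Qed.
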